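(* Let $K\subseteq\mathbb{R}^n$ be a proper cone, $b\in\mathbb{R}^n$, and let $A\in\mathbb{R}^{n\times n}$ be $K$-nonnegative and $K$-monotone. Let $A=U-V$ be a $K$-regular splitting and let $U=F-G$ be a $K$-weak regular splitting of type II such that $VF^{-1}G=GF^{-1}V$. Let $s\geq1$ be a fixed number of inner iterations, and set $$T_{s}=(F^{-1}G)^{s}+\sum_{j=0}^{s-1}(F^{-1}G)^{j}F^{-1}V,\qquad P_s^{-1}=\sum_{j=0}^{s-1}(F^{-1}G)^{j}F^{-1}.$$ Let sequences $\{x_k\},\{y_k\}$ be generated by $x_{k+1}=T_sx_k+P_s^{-1}b$ and $y_{k+1}=T_sy_k+P_s^{-1}b$, $k=0,1,2,\ldots$, from initial vectors $x_0,y_0$ satisfying $$x_1\geq_K x_0,\quad y_0\geq_K y_1,\quad y_0\geq_K A^{-1}b\geq_K x_0.$$ Then (i) $y_k\geq_K y_{k+1}\geq_K x_{k+1}\geq_K x_k$ for all $k=0,1,2,\ldots$; (ii) $\lim_{k\to\infty}x_k=A^{-1}b=\lim_{k\to\infty}y_k$ and $y_k\geq_K y_{k+1}\geq_K A^{-1}b\geq_K x_{k+1}\geq_K x_k$ for all $k=0,1,2,\ldots$.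
   Context: A proper cone $K\subseteq\mathbb{R}^n$ is a closed, convex, pointed, solid cone. For $M\in\mathbb{R}^{n\times n}$, $M\geq_K 0$ ($M$ is $K$-nonnegative) means $MK\subseteq K$; for vectors, $x\geq_K y$ means $x-y\in K$. A matrix $A$ is $K$-monotone if $A$ is nonsingular and $A^{-1}\geq_K 0$. A splitting $A=U-V$ (with $U$ nonsingular) is $K$-regular if $U^{-1}\geq_K 0$ and $V\geq_K 0$; it is a $K$-weak regular splitting of type II if $U^{-1}\geq_K 0$ and $VU^{-1}\geq_K 0$. *)

(* Defs.v *)
(* R : realType, R^n = 'cV[R]_n with its canonical
   (product / sup-norm) topology from MathComp-Analysis. *)
From HB Require Import structures.
From mathcomp Require Import all_boot all_order all_algebra.
From mathcomp Require Import all_classical all_reals all_analysis.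
Set Implicit Arguments. Unset Strict Implicit. Unset Printing Implicit Defensive.
Import Order.TTheory GRing.Theory Num.Theory.
Import numFieldNormedType.Exports.
Local Open Scope classical_set_scope.
Local Open Scope ring_scope.

Definition is_cone (R : realType) (n : nat) (K : set 'cV[R]_n) : Prop :=
  forall (a : R) (x : 'cV[R]_n), 0 <= a -> K x -> K (a *: x).

Definition is_convex_set (R : realType) (n : nat) (K : set 'cV[R]_n) : Prop :=
  forall (t : R) (x y : 'cV[R]_n), 0 <= t <= 1 -> K x -> K y ->
    K (t *: x + (1 - t) *: y).

Definition is_pointed (R : realType) (n : nat) (K : set 'cV[R]_n) : Prop :=
  forall x : 'cV[R]_n, K x -> K (- x) -> x = 0.

Definition is_solid (R : realType) (n : nat) (K : set 'cV[R]_n) : Prop :=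
  (interior K) !=set0.

Definition proper_cone (R : realType) (n : nat) (K : set 'cV[R]_n) : Prop :=
  [/\ is_cone K, closed K, is_convex_set K, is_pointed K & is_solid K].

Definition Kge (R : realType) (n : nat) (K : set 'cV[R]_n) (x y : 'cV[R]_n) : Prop :=
  K (x - y).

Definition Knonneg (R : realType) (n : nat) (K : set 'cV[R]_n) (M : 'M[R]_n) : Prop :=
  forall x, K x -> K (M *m x).

Definition Kmonotone (R : realType) (n : nat) (K : set 'cV[R]_n) (A : 'M[R]_n) : Prop :=
  A \in unitmx /\ Knonneg K (invmx A).

Definition K_regular_splitting (R : realType) (n : nat) (K : set 'cV[R]_n)
  (A U V : 'M[R]_n) : Prop :=
  [/\ A = U - V, U \in unitmx, Knonneg K (invmx U) & Knonneg K V].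

Definition K_weak_regular_splitting_II (R : realType) (n : nat) (K : set 'cV[R]_n)
  (A U V : 'M[R]_n) : Prop :=
  [/\ A = U - V, U \in unitmx, Knonneg K (invmx U) & Knonneg K (V *m invmx U)].

Definition Ts (R : realType) (n : nat) (F G V : 'M[R]_n) (s : nat) : 'M[R]_n :=
  (invmx F *m G) ^+ s + \sum_(j < s) ((invmx F *m G) ^+ j *m invmx F *m V).

Definition Psinv (R : realType) (n : nat) (F G : 'M[R]_n) (s : nat) : 'M[R]_n :=
  \sum_(j < s) ((invmx F *m G) ^+ j *m invmx F).

(* Main.v *)
Require Import Defs.
From HB Require Import structures.
From mathcomp Require Import all_boot all_order all_algebra.
From mathcomp Require Import all_classical all_reals all_analysis.
From mathcomp Require Import lra.
Import Order.TTheory GRing.Theory Num.Theory.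
Import numFieldNormedType.Exports.
Local Open Scope classical_set_scope.
Local Open Scope ring_scope.
Section Ana.
Variable R : realType.

Lemma bigmax_ge0 (I : finType) (f : I -> R) : 0 <= \big[Num.max/0]_(i : I) f i.
Proof. by elim/big_rec: _ => // i y _ y0; rewrite le_max y0 orbT. Qed.

Lemma normtr (m n : nat) (x : 'M[R]_(m, n)) : `|x^T| = `|x|.
Proof.
rewrite /Num.Def.normr /= !mx_normrE; apply/le_anti/andP; split; apply/bigmax_leP; split.
- exact: bigmax_ge0.
- by move=> ij _; rewrite mxE; exact: (le_bigmax _ _ (ij.2, ij.1)).
- exact: bigmax_ge0.
- move=> ij _; have := le_bigmax 0 (fun ij : 'I_n * 'I_m => `|x^T ij.1 ij.2|) (ij.2, ij.1).
  by rewrite /= mxE.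
Qed.

Lemma mx_entry_le m p (v : 'M[R]_(m,p)) i j : `|v i j| <= `|v|.
Proof.
rewrite [leRHS]/Num.Def.normr /= mx_normrE.
exact: (le_bigmax _ (fun ij : 'I_m * 'I_p => `|v ij.1 ij.2|) (i, j)).
Qed.

Lemma mx_norm_le m p (v : 'M[R]_(m,p)) c : 0 <= c -> (forall i j, `|v i j| <= c) -> `|v| <= c.
Proof.
move=> c0 H; rewrite [leLHS]/Num.Def.normr /= mx_normrE.
by apply/bigmax_leP; split => // ij _; exact: H.
Qed.

Lemma mulmx_lip m n (T : 'M[R]_(m,n)) : exists2 c, 0 <= c & forall v : 'cV[R]_n, `|T *m v| <= c * `|v|.
Proof.
exists (\sum_i \sum_j `|T i j|); first by apply: sumr_ge0 => i _; apply: sumr_ge0.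
move=> v; apply: mx_norm_le.
  by rewrite mulr_ge0 // sumr_ge0 // => i _; rewrite sumr_ge0.
move=> i j; rewrite mxE; apply: le_trans (ler_norm_sum _ _ _) _.
apply: (@le_trans _ _ (\sum_k `|T i k| * `|v|)).
  by apply: ler_sum => k _; rewrite normrM ler_wpM2l // mx_entry_le.
rewrite -mulr_suml ler_wpM2r //.
by rewrite (bigD1 i) //= lerDl sumr_ge0 // => k _; rewrite sumr_ge0.
Qed.

Lemma cluster_seq (n : nat) (u : nat -> 'cV[R]_n) (M : R) : 0 < M ->
  (forall k, `|u k| <= M) ->
  exists c, forall e, 0 < e -> forall N, exists2 m, (N <= m)%N & `|u m - c| < e.
Proof.
move=> M0 uM.
set Bt := [set r : 'rV[R]_n | `|r| <= M].
have cBt : compact Bt.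
  apply: bounded_closed_compact.
    exists M; split; first by rewrite num_real.
    by move=> r Mr v /= Bv; rewrite /Bt /= in Bv; apply: le_trans Bv (ltW Mr).
  have -> : Bt = closed_ball_ Num.Def.normr (0 : 'rV[R]_n) M.
    by apply/funext => v; rewrite /closed_ball_ /Bt /= sub0r normrN.
  exact: closed_closed_ball_.
have [c [Bc clc]] : Bt `&` cluster ((fun k => (u k)^T) @ \oo) !=set0.
  by apply: cBt; exists 0%N => // k _; rewrite /Bt /= normtr.
exists c^T => e e0 N.
have := clc [set r | exists2 m, (N <= m)%N & r = (u m)^T] (ball c e) _ _.
case=> //.
- by exists N => // m /= Hm; exists m.
- exact: nbhsx_ballx.
move=> r [[m Nm ->]]; rewrite -ball_normE /ball_ /= => bm; exists m => //.
by rewrite -normtr linearB /= trmxK distrC.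
Qed.

Section ConeAna.
Variables (n : nat) (K : set 'cV[R]_n).
Hypotheses (Kcone : is_cone K) (Kcl : closed K) (Kpt : is_pointed K).

Lemma aux_div (x y z : R) : 0 < x -> 0 < z -> y * z < x -> x^-1 * y < z^-1.
Proof. by move=> x0 z0 h; rewrite ltr_pdivrMl // ltr_pdivlMr. Qed.

Lemma Kapprox p : (forall e, 0 < e -> exists v, K v /\ `|v - p| < e) -> K p.
Proof.
move=> H; apply: Kcl => B /nbhs_ballP [e e0 sB].
have [v [Kv vp]] := H e e0; exists v; split => //; apply: sB.
by rewrite -ball_normE /ball_ /= distrC.
Qed.

Lemma Knormal : exists2 C, 0 < C & forall a b, K a -> K (b - a) -> `|a| <= C * `|b|.
Proof.
case: (pselect (exists2 C, 0 < C & forall a b, K a -> K (b - a) -> `|a| <= C * `|b|)) => [p|nC]; first exact: p.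
have H m : exists ab : 'cV[R]_n * 'cV[R]_n, [/\ K ab.1, K (ab.2 - ab.1), `|ab.1| = 1
   & `|ab.2| < (m.+1%:R)^-1].
  have /existsNP [a /existsNP [b]] : ~ forall a b, K a -> K (b - a) -> `|a| <= m.+1%:R * `|b|.
    by move=> H; apply: nC; exists m.+1%:R.
  move=> /not_implyP [Ka /not_implyP [Kba]] /negP; rewrite -ltNge => lt.
  have a0 : 0 < `|a| by apply: le_lt_trans lt; rewrite mulr_ge0.
  exists (`|a|^-1 *: a, `|a|^-1 *: b); split => /=.
  - by apply: Kcone => //; rewrite invr_ge0 ltW.
  - by rewrite -scalerBr; apply: Kcone => //; rewrite invr_ge0 ltW.
  - by rewrite normrZ normrV ?unitfE ?gt_eqF // normr_id mulVf // gt_eqF.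
  - rewrite normrZ normrV ?unitfE ?gt_eqF // normr_id.
    by apply: aux_div => //; rewrite mulrC.
have [f Hf] := choice H.
have [c Hc] : exists c, forall e, 0 < e -> forall N, exists2 m, (N <= m)%N & `|(f m).1 - c| < e.
  by apply: (@cluster_seq n (fun m => (f m).1) 1) => // m; have [_ _ -> _] := Hf m.
have Kc : K c.
  apply: Kapprox => e e0; have [m _ hm] := Hc e e0 0%N.
  by exists (f m).1; have [? _ _ _] := Hf m.
have Knc : K (- c).
  apply: Kapprox => e e0.
  have e20 : 0 < e / 2 by rewrite divr_gt0.
  have [N _ HN] := near_infty_natSinv_lt (PosNum e20).
  have [m Nm hm] := Hc (e / 2) e20 N.
  have [_ K2 _ b2] := Hf m.
  exists ((f m).2 - (f m).1); split => //.
  rewrite opprK (_ : _ - _ + c = (f m).2 - ((f m).1 - c)); last by rewrite opprB addrA addrAC.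
  apply: le_lt_trans (ler_normB _ _) _.
  rewrite (splitr e) ltrD //.
  by apply: lt_trans b2 _; apply: (HN m).
have c0 := Kpt _ Kc Knc.
have [m _] := Hc 1 ltr01 0%N.
by have [_ _ h _] := Hf m; rewrite c0 subr0 h ltxx.
Qed.

Hypothesis Kconv : is_convex_set K.

Lemma Kadd x y : K x -> K y -> K (x + y).
Proof.
move=> Kx Ky.
have -> : x + y = 2 *: (2^-1 *: x + (1 - 2^-1) *: y).
  have h : (1 - 2^-1 : R) = 2^-1 by rewrite {1}(splitr 1) mul1r addrK.
  by rewrite h -scalerDr scalerA mulfV ?scale1r // pnatr_eq0.
apply: Kcone; first by [].
apply: Kconv => //; rewrite invr_ge0 ler0n /= invf_le1 ?ler1n //.
Qed.

Lemma Ksub0 x : K x -> K 0.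
Proof. by move=> Kx; rewrite -(scale0r x); apply: Kcone. Qed.

Lemma Ktele (w : nat -> 'cV[R]_n) : (forall k, K (w k)) -> (forall k, K (w k - w k.+1)) ->
  forall k m, (k <= m)%N -> K (w k - w m).
Proof.
move=> Kw Kd k m /subnKC <-; elim: (m - k)%N => [|j IH].
  by rewrite addn0 subrr; exact: (@Ksub0 (w k) (Kw k)).
rewrite addnS (_ : w k - w (k + j).+1 = (w k - w (k + j)) + (w (k + j) - w (k + j).+1)).
  exact: Kadd.
by rewrite addrA subrK.
Qed.

Lemma Kmono (w : nat -> 'cV[R]_n) : (forall k, K (w k)) -> (forall k, K (w k - w k.+1)) ->
  exists l, [/\ K l, w @ \oo --> l & forall k, K (w k - l)].
Proof.
move=> Kw Kd; have Kt := Ktele w Kw Kd.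
have [C C0 HC] := Knormal.
have [l Hl] : exists l, forall e, 0 < e -> forall N, exists2 m, (N <= m)%N & `|w m - l| < e.
  apply: (@cluster_seq n w (C * `|w 0%N| + 1)).
    by apply: ltr_wpDl => //; rewrite mulr_ge0 // ltW.
  move=> k; apply: le_trans (HC (w k) (w 0%N) (Kw k) (Kt _ _ (leq0n k))) _.
  by rewrite lerDl.
have Kwl k : K (w k - l).
  apply: Kapprox => e e0; have [m km hm] := Hl e e0 k.
  exists (w k - w m); split; first exact: Kt.
  by rewrite opprB addrC addrA subrK distrC.
exists l; split => //.
- apply: Kapprox => e e0; have [m km hm] := Hl e e0 0%N.
  by exists (w m).
- apply/cvgrPdist_lt => e e0.
  have [m _ hm] := Hl (e / C) (divr_gt0 e0 C0) 0%N.
  exists m => // k /= mk; rewrite distrC.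
  apply: le_lt_trans (HC (w k - l) (w m - l) (Kwl k) _) _.
    by rewrite opprB addrA subrK; exact: Kt.
  by rewrite -ltr_pdivlMl // mulrC.
Qed.
End ConeAna.
End Ana.

Lemma arith (R : realType) (c e : R) : 0 <= c -> 0 < e -> c * (e / (c + 2)) + e / (c + 2) < e.
Proof.
move=> c0 e0; have c2 : 0 < c + 2 by lra.
rewrite -{2}(mul1r (e / (c + 2))) -mulrDl mulrA ltr_pdivrMr //; lra.
Qed.

Lemma exprSmx (R : realType) n (M : 'M[R]_n) k : M ^+ k.+1 = M ^+ k *m M.
Proof. by rewrite exprSr mulmxE. Qed.
Lemma exprSmxl (R : realType) n (M : 'M[R]_n) k : M ^+ k.+1 = M *m M ^+ k.
Proof. by rewrite exprS mulmxE. Qed.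

Lemma tele (R : realType) n (M : 'M[R]_n) s :
  \sum_(j < s) (M ^+ j - M ^+ j.+1) = 1%:M - M ^+ s.
Proof.
elim: s => [|s IH]; first by rewrite big_ord0 expr0 subrr.
by rewrite big_ord_recr /= IH addrA subrK.
Qed.

Lemma zmod_aux (Z : zmodType) (a b c : Z) : a + b + (c - a - b) = c.
Proof. by rewrite -[c - a - b]addrA -opprD [LHS]addrC subrK. Qed.

Lemma recB (Z : zmodType) (a b c : Z) : (a + c) - (b + c) = a - b.
Proof. by rewrite opprD addrACA subrr addr0. Qed.

Section Main.
Variables (R : realType) (n : nat) (K : set 'cV[R]_n) (A U V F G : 'M[R]_n) (s : nat).
Hypotheses (Kcone : is_cone K) (Kcl : closed K) (Kconv : is_convex_set K)
  (Kpt : is_pointed K) (K0 : K 0).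
Hypotheses (Anon : Knonneg K A) (Aunit : A \in unitmx) (AUV : A = U - V)
  (Uunit : U \in unitmx) (Uinon : Knonneg K (invmx U)) (Vnon : Knonneg K V)
  (UFG : U = F - G) (Funit : F \in unitmx) (Finon : Knonneg K (invmx F))
  (GFnon : Knonneg K (G *m invmx F)) (s1 : (1 <= s)%N).

Local Notation H := (invmx F *m G).
Local Notation T := (Ts F G V s).
Local Notation P := (Psinv F G s).

Lemma nnM (M N : 'M[R]_n) : Knonneg K M -> Knonneg K N -> Knonneg K (M *m N).
Proof. by move=> hM hN v Kv; rewrite -mulmxA; apply/hM/hN. Qed.

Lemma nnD (M N : 'M[R]_n) : Knonneg K M -> Knonneg K N -> Knonneg K (M + N).
Proof. by move=> hM hN v Kv; rewrite mulmxDl; apply: Kadd => //; [apply: hM|apply: hN]. Qed.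

Lemma nn1 : Knonneg K 1%:M.
Proof. by move=> v; rewrite mul1mx. Qed.

Lemma nn0 : Knonneg K 0.
Proof. by move=> v _; rewrite mul0mx. Qed.

Lemma nnX (M : 'M[R]_n) k : Knonneg K M -> Knonneg K (M ^+ k).
Proof.
move=> hM; elim: k => [|k IH]; first by rewrite expr0; exact: nn1.
by rewrite exprSmxl; apply: nnM.
Qed.

Lemma nnS m (f : 'I_m -> 'M[R]_n) : (forall j, Knonneg K (f j)) -> Knonneg K (\sum_j f j).
Proof.
move=> hf; elim/big_ind: _ => //; [exact: nn0 | by move=> ? ? ? ?; apply: nnD].
Qed.

Lemma Unon : Knonneg K U.
Proof. have -> : U = A + V by rewrite AUV subrK. exact: nnD. Qed.

Lemma Hnon : Knonneg K H.
Proof.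
have -> : H = invmx U *m (G *m invmx F) *m U.
  have GE : G = F - U by rewrite UFG opprB addrC subrK.
  rewrite GE mulmxBr mulVmx // mulmxBl mulmxV // mulmxBr mulmx1 mulmxA mulVmx //.
  by rewrite mul1mx mulmxBl mulVmx.
by apply: nnM; [apply: nnM|apply: Unon].
Qed.

Lemma Tnon : Knonneg K T.
Proof.
rewrite /Ts; apply: nnD; first exact: nnX Hnon.
by apply: nnS => j; apply: nnM => //; apply: nnM => //; apply: nnX Hnon.
Qed.

Lemma TPA : T + P *m A = 1%:M.
Proof.
have FiU : invmx F *m U = 1%:M - H by rewrite UFG mulmxBr mulVmx.
have PU : P *m U = 1%:M - H ^+ s.
  rewrite /Psinv mulmx_suml.
  under eq_bigr => j _ do rewrite -mulmxA FiU mulmxBr mulmx1 -exprSmx.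
  exact: tele.
rewrite AUV mulmxBr PU /Ts /Psinv mulmx_suml.
exact: zmod_aux.
Qed.

Variable b : 'cV[R]_n.
Local Notation xs := (invmx A *m b).

Lemma fixpt : T *m xs + P *m b = xs.
Proof.
have -> : P *m b = P *m A *m xs by rewrite -mulmxA [A *m _]mulmxA mulmxV // mul1mx.
by rewrite -mulmxDl TPA mul1mx.
Qed.

Section Seq.
Variable z : nat -> 'cV[R]_n.
Hypothesis hz : forall k, z k.+1 = T *m z k + P *m b.

Lemma zdiff k : z k.+1 - z k = T ^+ k *m (z 1%N - z 0%N).
Proof.
elim: k => [|k IH]; first by rewrite expr0 mul1mx.
by rewrite [z k.+2]hz [X in _ - X]hz recB -mulmxBr IH mulmxA -exprSmxl.
Qed.

Lemma zstar k : xs - z k = T ^+ k *m (xs - z 0%N).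
Proof.
elim: k => [|k IH]; first by rewrite expr0 mul1mx.
by rewrite hz -{1}fixpt recB -mulmxBr IH mulmxA -exprSmxl.
Qed.

Lemma zstar' k : z k - xs = T ^+ k *m (z 0%N - xs).
Proof.
elim: k => [|k IH]; first by rewrite expr0 mul1mx.
by rewrite hz -{1}fixpt recB -mulmxBr IH mulmxA -exprSmxl.
Qed.
End Seq.

Lemma HjFi j : H ^+ j *m invmx F = invmx F *m (G *m invmx F) ^+ j.
Proof.
elim: j => [|j IH]; first by rewrite !expr0 mul1mx mulmx1.
have e1 : H *m invmx F = invmx F *m (G *m invmx F) by rewrite mulmxA.
rewrite [H ^+ _]exprSmx [in RHS]exprSmx -[in LHS]mulmxA e1. by rewrite [in LHS]mulmxA IH -mulmxA.
Qed.

Lemma fix0 l : K l -> T *m l = l -> l = 0.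
Proof.
move=> Kl Tl.
have PAl : P *m A *m l = 0.
  have -> : P *m A = 1%:M - T by rewrite -TPA [T + _]addrC addrK.
  by rewrite mulmxBl mul1mx Tl subrr.
set W := G *m invmx F.
have PE : P = invmx F *m \sum_(j < s) W ^+ j.
  by rewrite /Psinv mulmx_sumr; apply: eq_bigr => j _; rewrite HjFi.
set zz := A *m l.
have Kz : K zz by apply: Anon.
have Sz : (\sum_(j < s) W ^+ j) *m zz = 0.
  have : F *m (P *m A *m l) = 0 by rewrite PAl mulmx0.
  by rewrite PE -!mulmxA mulmxA mulmxV // mul1mx.
move: Sz; case: s s1 => // s' _; rewrite big_ord_recl /= expr0 mulmxDl mul1mx => /eqP.
rewrite addr_eq0 => /eqP zE.
have Kmz : K (- zz).
  have hS : Knonneg K (\sum_(i < s') W ^+ bump 0 i) by apply: nnS => j; exact: nnX.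
  by rewrite zE opprK; apply: hS.
have z0 : zz = 0 := Kpt _ Kz Kmz.
by rewrite -[l]mul1mx -(mulVmx Aunit) -mulmxA -/zz z0 mulmx0.
Qed.


Lemma conv0 d : K d -> K (d - T *m d) ->
  forall e, 0 < e -> \forall k \near \oo, `|T ^+ k *m d| < e.
Proof.
move=> Kd Kdd.
set w := fun k => T ^+ k *m d.
have Kw k : K (w k) by exact: (@nnX T k Tnon _ Kd).
have Kww k : K (w k - w k.+1).
  by rewrite /w exprSmx -mulmxA -mulmxBr; exact: (@nnX T k Tnon _ Kdd).
have [l [Kl wl Kwl]] := @Kmono R n K Kcone Kcl Kpt Kconv w Kw Kww.
have Tl : T *m l = l.
  have [c c0 hc] := @mulmx_lip R n n T.
  apply/eqP; rewrite -subr_eq0; apply/eqP.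
  case: (eqVneq (T *m l - l) 0) => // ne.
  have eg : 0 < `|T *m l - l| by rewrite normr_gt0.
  set e := `|T *m l - l| in eg.
  have c2 : 0 < c + 2 by apply: ltr_wpDl.
  have e'0 : 0 < e / (c + 2) by rewrite divr_gt0.
  move/cvgrPdist_lt: wl => /(_ _ e'0) [N _ HN].
  have h1 := HN N (leqnn N); have h2 := HN N.+1 (leqnSn N).
  have : e <= c * `|l - w N| + `|l - w N.+1|.
    rewrite /e (_ : T *m l - l = T *m (l - w N) + (w N.+1 - l)).
      by apply: le_trans (ler_normD _ _) _; rewrite lerD // ?hc // distrC.
    by rewrite mulmxBr /w [T ^+ N.+1]exprSmxl -mulmxA addrA subrK.
  move=> he.
  have : c * `|l - w N| + `|l - w N.+1| < e.
    have := @arith R _ _ c0 eg; apply: le_lt_trans.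
    by rewrite lerD ?ler_wpM2l // ltW.
  by move/(le_lt_trans he); rewrite ltxx.
have l0 : l = 0 := fix0 _ Kl Tl.
move=> e e0; move/cvgrPdist_lt: wl => /(_ _ e0).
by apply: filterS => k; rewrite l0 sub0r normrN.
Qed.

Lemma main_sec (x y : nat -> 'cV[R]_n) :
  (forall k, x k.+1 = T *m x k + P *m b) ->
  (forall k, y k.+1 = T *m y k + P *m b) ->
  Kge K (x 1%N) (x 0%N) -> Kge K (y 0%N) (y 1%N) ->
  Kge K (y 0%N) xs -> Kge K xs (x 0%N) ->
  (forall k, [/\ Kge K (y k) (y k.+1), Kge K (y k.+1) (x k.+1)
               & Kge K (x k.+1) (x k)]) /\
  (x @ \oo --> xs /\ y @ \oo --> xs /\
   forall k, [/\ Kge K (y k) (y k.+1), Kge K (y k.+1) xs,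
                 Kge K xs (x k.+1) & Kge K (x k.+1) (x k)]).
Proof.
move=> hx hy h1 h2 h3 h4; rewrite /Kge in h1 h2 h3 h4 *.
have TK k v : K v -> K (T ^+ k *m v) := @nnX T k Tnon v.
have xinc k : K (x k.+1 - x k) by rewrite (@zdiff x hx); apply: TK.
have ydec k : K (y k - y k.+1).
  by rewrite -opprB (@zdiff y hy) -mulmxN opprB; apply: TK.
have xle k : K (xs - x k) by rewrite (@zstar x hx); apply: TK.
have yge k : K (y k - xs) by rewrite (@zstar' y hy); apply: TK.
have yx k : K (y k - x k).
  have -> : y k - x k = (y k - xs) + (xs - x k) by rewrite addrA subrK.
  exact: Kadd.
split; first by move=> k; split.
split; [|split; last by move=> k; split].
- apply/cvgrPdist_lt => e e0.
  have Kdd : K ((xs - x 0%N) - T *m (xs - x 0%N)).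
    by rewrite -[T]expr1 -(@zstar x hx 1) opprB addrC addrA subrK.
  by apply: filterS (conv0 _ h4 Kdd _ e0) => k; rewrite -(@zstar x hx).
- apply/cvgrPdist_lt => e e0.
  have Kdd : K ((y 0%N - xs) - T *m (y 0%N - xs)).
    by rewrite -[T]expr1 -(@zstar' y hy 1) recB.
  by apply: filterS (conv0 _ h3 Kdd _ e0) => k; rewrite -(@zstar' y hy) distrC.
Qed.
End Main.

Theorem theorem4p1 (R : realType) (n : nat) (K : set 'cV[R]_n) (b : 'cV[R]_n)
  (A U V F G : 'M[R]_n) (s : nat) (x y : nat -> 'cV[R]_n) :
  proper_cone K ->
  Knonneg K A -> Kmonotone K A ->
  K_regular_splitting K A U V ->
  K_weak_regular_splitting_II K U F G ->
  V *m invmx F *m G = G *m invmx F *m V ->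
  (1 <= s)%N ->
  (forall k, x k.+1 = Ts F G V s *m x k + Psinv F G s *m b) ->
  (forall k, y k.+1 = Ts F G V s *m y k + Psinv F G s *m b) ->
  Kge K (x 1%N) (x 0%N) -> Kge K (y 0%N) (y 1%N) ->
  Kge K (y 0%N) (invmx A *m b) -> Kge K (invmx A *m b) (x 0%N) ->
  (forall k, [/\ Kge K (y k) (y k.+1), Kge K (y k.+1) (x k.+1)
               & Kge K (x k.+1) (x k)]) /\
  (x @ \oo --> invmx A *m b /\ y @ \oo --> invmx A *m b /\
   forall k, [/\ Kge K (y k) (y k.+1), Kge K (y k.+1) (invmx A *m b),
                 Kge K (invmx A *m b) (x k.+1) & Kge K (x k.+1) (x k)]).
Proof.
move=> [Kcone Kcl Kconv Kpt Ksol] Anon [Aunit Ainon] [AUV Uunit Uinon Vnon]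
  [UFG Funit Finon GFnon] comm s1 hx hy h1 h2 h3 h4.
have K0 : K 0.
  have [e /interior_subset Ke] := Ksol.
  by rewrite -(scale0r e); apply: Kcone.
have HH := (@main_sec R n K A U V F G s Kcone Kcl Kconv Kpt K0 Anon Aunit AUV Uunit Uinon Vnon UFG
  Funit Finon GFnon s1 b x y hx hy h1 h2 h3 h4).
by case: HH => HH1 [HH2 [HH3 HH4]]; split => //; split.
Qed.
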